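(* Let $\sigma,\eta>0$ and $\mathscr{C}$ be a family of balls as in the context. Let $B\in\mathscr{C}$ and $x\in B$. Then $y\in B^{(4\lceil|x-y|\rceil)}$ for every $y\in\mathbb{R}^3$.
   Context: Cover: for constants $\sigma,\eta>0$, $\mathscr{C}$ is a family of closed balls in $\mathbb{R}^3$ with $\bigcup_{B\in\mathscr{C}}B=\mathbb{R}^3$ and $|B|\geq 4\pi/3$ for all $B\in\mathscr{C}$, such that (i) each ball in $\mathscr{C}$ intersects at most $\sigma$ balls in $\mathscr{C}$, and (ii) if $B,B'\in\mathscr{C}$ intersect then $\eta^{-1}\le |B|^{1/3}/|B'|^{1/3}\le\eta$. Layers: for $B\in\mathscr{C}$ set $B^{(0)}:=B$, $P^{(0)}:=\{B\}$, and for $n\ge1$, $P^{(n)}:=\{B'\in\mathscr{C}: B'\cap B^{(n-1)}\neq\emptyset\}$, $B^{(n)}:=\bigcup_{B'\in P^{(n)}}B'$. *)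

(* Defs.v *)
From Stdlib Require Import Reals Lra List ZArith.
Open Scope R_scope.

Definition pt := (R * R * R)%type.

Definition dist3 (x y : pt) : R :=
  let '(x1, x2, x3) := x in let '(y1, y2, y3) := y in
  sqrt ((x1 - y1) ^ 2 + (x2 - y2) ^ 2 + (x3 - y3) ^ 2).

Record ball3 := Ball3 { center : pt ; radius : R }.

Definition in_ball (B : ball3) (x : pt) : Prop := dist3 (center B) x <= radius B.

(* Lebesgue measure |B| of the closed ball B (radius >= 0). *)
Definition vol (B : ball3) : R := 4 / 3 * PI * radius B ^ 3.

Definition intersect (B B' : ball3) : Prop := exists z, in_ball B z /\ in_ball B' z.

(* ceiling of a real number, as an integer: least integer >= d *)
Definition Rceil (d : R) : Z := (1 - up (- d))%Z.

Definition Cover (sigma eta : R) (C : ball3 -> Prop) : Prop :=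
  (forall x : pt, exists B, C B /\ in_ball B x) /\
  (forall B, C B -> vol B >= 4 * PI / 3) /\
  (forall B, C B -> exists l : list ball3, NoDup l /\ INR (length l) <= sigma /\
      forall B', C B' -> intersect B B' -> In B' l) /\
  (forall B B', C B -> C B' -> intersect B B' ->
      / eta <= Rpower (vol B) (1/3) / Rpower (vol B') (1/3) <= eta).

Fixpoint layer (C : ball3 -> Prop) (B : ball3) (n : nat) : pt -> Prop :=
  match n with
  | O => in_ball B
  | S m => fun y => exists B', C B' /\ (exists z, in_ball B' z /\ layer C B m z)
                               /\ in_ball B' y
  end.

(* Main.v *)
Require Import Defs.
From Stdlib Require Import Reals ZArith Lra Lia Psatz List Classical.
Open Scope R_scope.

Definition lerp (a b : pt) (t : R) : pt :=
  let '(a1, a2, a3) := a in let '(b1, b2, b3) := b in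
  (a1 + t * (b1 - a1), a2 + t * (b2 - a2), a3 + t * (b3 - a3)).

Definition D2 (x y : pt) : R :=
  let '(x1, x2, x3) := x in let '(y1, y2, y3) := y in
  (x1 - y1) ^ 2 + (x2 - y2) ^ 2 + (x3 - y3) ^ 2.

Lemma D2_nonneg x y : 0 <= D2 x y.
Proof. destruct x as [[x1 x2] x3]; destruct y as [[y1 y2] y3]; unfold D2; pose proof (pow2_ge_0 (x1-y1)); pose proof (pow2_ge_0 (x2-y2)); pose proof (pow2_ge_0 (x3-y3)); lra. Qed.

Lemma dist3_D2 x y : dist3 x y = sqrt (D2 x y).
Proof. destruct x as [[x1 x2] x3]; destruct y as [[y1 y2] y3]; reflexivity. Qed.

Lemma dist3_sq x y : dist3 x y * dist3 x y = D2 x y.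
Proof. rewrite dist3_D2. apply sqrt_sqrt, D2_nonneg. Qed.

Lemma dist3_pos x y : 0 <= dist3 x y.
Proof. rewrite dist3_D2; apply sqrt_pos. Qed.

Lemma dist3_sym x y : dist3 x y = dist3 y x.
Proof. destruct x as [[x1 x2] x3]; destruct y as [[y1 y2] y3]; unfold dist3; f_equal; ring. Qed.

Lemma dist3_self x : dist3 x x = 0.
Proof. destruct x as [[x1 x2] x3]; unfold dist3.
  replace ((x1 - x1) ^ 2 + (x2 - x2) ^ 2 + (x3 - x3) ^ 2) with 0 by ring. apply sqrt_0. Qed.

Lemma lerp0 a b : lerp a b 0 = a.
Proof. destruct a as [[a1 a2] a3]; destruct b as [[b1 b2] b3]; simpl; f_equal; [f_equal|]; ring. Qed.

Lemma lerp1 a b : lerp a b 1 = b.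
Proof. destruct a as [[a1 a2] a3]; destruct b as [[b1 b2] b3]; simpl; f_equal; [f_equal|]; ring. Qed.

Lemma dist_lerp a b s t : dist3 (lerp a b s) (lerp a b t) = Rabs (s - t) * dist3 a b.
Proof.
  destruct a as [[a1 a2] a3]; destruct b as [[b1 b2] b3]; unfold dist3, lerp.
  rewrite <- sqrt_Rsqr_abs. rewrite <- sqrt_mult_alt by apply Rle_0_sqr.
  f_equal; unfold Rsqr; ring.
Qed.

Lemma tri6 u1 u2 u3 v1 v2 v3 :
  sqrt ((u1 + v1) ^ 2 + (u2 + v2) ^ 2 + (u3 + v3) ^ 2)
  <= sqrt (u1 ^ 2 + u2 ^ 2 + u3 ^ 2) + sqrt (v1 ^ 2 + v2 ^ 2 + v3 ^ 2).
Proof.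
  set (A := u1 ^ 2 + u2 ^ 2 + u3 ^ 2). set (B := v1 ^ 2 + v2 ^ 2 + v3 ^ 2).
  assert (HA : 0 <= A) by (unfold A; pose proof (pow2_ge_0 u1); pose proof (pow2_ge_0 u2); pose proof (pow2_ge_0 u3); lra). assert (HB : 0 <= B) by (unfold B; pose proof (pow2_ge_0 v1); pose proof (pow2_ge_0 v2); pose proof (pow2_ge_0 v3); lra).
  assert (Hd : u1 * v1 + u2 * v2 + u3 * v3 <= sqrt A * sqrt B).
  { rewrite <- sqrt_mult by auto.
    destruct (Rle_or_lt (u1 * v1 + u2 * v2 + u3 * v3) 0).
    - pose proof (sqrt_pos (A * B)); lra.
    - rewrite <- (sqrt_pow2 (u1 * v1 + u2 * v2 + u3 * v3)) by lra.
      apply sqrt_le_1_alt.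
      assert (E : A * B - (u1 * v1 + u2 * v2 + u3 * v3) ^ 2 =
        (u1*v2 - u2*v1)^2 + (u1*v3 - u3*v1)^2 + (u2*v3-u3*v2)^2) by (unfold A, B; ring).
      pose proof (pow2_ge_0 (u1*v2 - u2*v1)); pose proof (pow2_ge_0 (u1*v3 - u3*v1)); pose proof (pow2_ge_0 (u2*v3-u3*v2)). lra. }
  pose proof (sqrt_pos A); pose proof (sqrt_pos B).
  rewrite <- (sqrt_pow2 (sqrt A + sqrt B)) by lra.
  apply sqrt_le_1_alt.
  assert (E : (u1 + v1) ^ 2 + (u2 + v2) ^ 2 + (u3 + v3) ^ 2 = A + B + 2 * (u1 * v1 + u2 * v2 + u3 * v3)) by (unfold A, B; ring).
  rewrite E.
  replace ((sqrt A + sqrt B) ^ 2) with (sqrt A * sqrt A + sqrt B * sqrt B + 2 * (sqrt A * sqrt B)) by ring.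
  rewrite !sqrt_sqrt by auto. lra.
Qed.

Lemma dist3_tri x y z : dist3 x z <= dist3 x y + dist3 y z.
Proof.
  destruct x as [[x1 x2] x3]; destruct y as [[y1 y2] y3]; destruct z as [[z1 z2] z3]; unfold dist3.
  replace (x1 - z1) with ((x1 - y1) + (y1 - z1)) by ring.
  replace (x2 - z2) with ((x2 - y2) + (y2 - z2)) by ring.
  replace (x3 - z3) with ((x3 - y3) + (y3 - z3)) by ring.
  apply tri6.
Qed.

Lemma stewart a d f t :
  (1 - t) * D2 f a + t * D2 f d = D2 f (lerp a d t) + t * (1 - t) * D2 a d.
Proof. destruct a as [[a1 a2] a3]; destruct d as [[d1 d2] d3]; destruct f as [[f1 f2] f3]; unfold D2, lerp; ring. Qed.

Lemma intersect_of_dist B B' : 0 <= radius B -> 0 <= radius B' ->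
  dist3 (center B) (center B') <= radius B + radius B' -> intersect B B'.
Proof.
  intros h1 h2 h. set (c1 := center B) in *; set (c2 := center B') in *.
  destruct (Rle_or_lt (dist3 c1 c2) (radius B)) as [h3|h3].
  - exists c2; split; unfold in_ball; fold c1 c2; [lra| rewrite dist3_self; lra].
  - set (L := dist3 c1 c2) in *.
    exists (lerp c1 c2 (radius B / L)); unfold in_ball; fold c1 c2; split.
    + pose proof (dist_lerp c1 c2 0 (radius B / L)) as E. rewrite lerp0 in E. rewrite E.
      fold L. rewrite Rabs_left1.
      * field_simplify; lra.
      * assert (0 <= radius B / L) by (unfold Rdiv; apply Rmult_le_pos; [lra| left; apply Rinv_0_lt_compat; lra]). lra.
    + pose proof (dist_lerp c1 c2 1 (radius B / L)) as E. rewrite lerp1 in E. rewrite E.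
      fold L. assert (radius B / L < 1) by (unfold Rdiv; rewrite <- (Rinv_r L) by lra; apply Rmult_lt_compat_r; [apply Rinv_0_lt_compat|]; lra).
      rewrite Rabs_right by lra.
      replace ((1 - radius B / L) * L) with (L - radius B) by (field; lra). lra.
Qed.

Lemma key_ineq rA rD rF a b : 1 <= rA -> 1 <= rD -> 1 <= rF -> rA < a -> rD < b ->
  a + b <= rA + rD + 1 ->
  a * b * (a + b) <= b * (rA ^ 2 + 2 * rA * rF) + a * (rD ^ 2 + 2 * rD * rF).
Proof.
  intros h1 h2 h3 h4 h5 h6.
  set (s := a - rA). set (t := b - rD).
  assert (s1 : rA ^ 2 + 2 * rA * rF - a ^ 2 >= 2 * rA * t - s ^ 2).
  { assert (0 <= rA * (rF - 1)) by (apply Rmult_le_pos; lra).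
    assert (0 <= rA * (1 - s - t)) by (apply Rmult_le_pos; unfold s, t; lra).
    unfold s, t in *. nra. }
  assert (s2 : rD ^ 2 + 2 * rD * rF - b ^ 2 >= 2 * rD * s - t ^ 2).
  { assert (0 <= rD * (rF - 1)) by (apply Rmult_le_pos; lra).
    assert (0 <= rD * (1 - s - t)) by (apply Rmult_le_pos; unfold s, t; lra).
    unfold s, t in *. nra. }
  assert (s3 : b * s ^ 2 <= 2 * rD * a * s).
  { assert (0 <= s * (2 * rD * a - b * s)).
    { apply Rmult_le_pos. unfold s; lra.
      assert (b * s <= b) by (assert (s <= 1) by (unfold s,t in *; lra); nra).
      assert (rD <= rD * a) by nra. lra. }
    nra. }
  assert (s4 : a * t ^ 2 <= 2 * rA * b * t).
  { assert (0 <= t * (2 * rA * b - a * t)).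
    { apply Rmult_le_pos. unfold t; lra.
      assert (a * t <= a) by (assert (t <= 1) by (unfold s,t in *; lra); nra).
      assert (rA <= rA * b) by nra. lra. }
    nra. }
  assert (b * (rA ^ 2 + 2 * rA * rF - a ^ 2) >= b * (2 * rA * t - s ^ 2)) by nra.
  assert (a * (rD ^ 2 + 2 * rD * rF - b ^ 2) >= a * (2 * rD * s - t ^ 2)) by nra.
  nra.
Qed.

Lemma geom a d f rA rD rF t : 1 <= rA -> 1 <= rD -> 1 <= rF ->
  dist3 a d <= rA + rD + 1 -> 0 <= t <= 1 -> dist3 f (lerp a d t) <= rF ->
  dist3 f a <= rA + rF \/ dist3 f d <= rD + rF.
Proof.
  intros h1 h2 h3 hL ht hf.
  set (L := dist3 a d) in *. set (p := lerp a d t) in *.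
  assert (hpa : dist3 p a = t * L).
  { pose proof (dist_lerp a d t 0) as E. rewrite lerp0 in E. unfold p. rewrite E.
    rewrite Rminus_0_r, Rabs_right by lra. reflexivity. }
  assert (hpd : dist3 p d = (1 - t) * L).
  { pose proof (dist_lerp a d t 1) as E. rewrite lerp1 in E. unfold p. rewrite E.
    rewrite Rabs_left1 by lra. unfold L; ring. }
  pose proof (dist3_tri f p a). pose proof (dist3_tri f p d).
  pose proof (dist3_pos a d) as hL0; fold L in hL0.
  destruct (Rle_or_lt (t * L) rA) as [c1|c1]; [left; lra|].
  destruct (Rle_or_lt ((1 - t) * L) rD) as [c2|c2]; [right; lra|].
  destruct (Rle_or_lt (dist3 f a) (rA + rF)) as [c3|c3]; [left; lra|].
  destruct (Rle_or_lt (dist3 f d) (rD + rF)) as [c4|c4]; [right; lra|].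
  exfalso.
  assert (tpos : 0 < t) by (destruct (Rle_or_lt t 0); [assert (t * L <= 0) by nra; lra | lra]).
  assert (tlt : t < 1) by (destruct (Rle_or_lt 1 t); [assert ((1 - t) * L <= 0) by nra; lra | lra]).
  assert (Lpos : 0 < L) by (destruct (Rle_or_lt L 0); [assert (t * L <= 0) by nra; lra | lra]).
  pose proof (stewart a d f t) as St. fold p in St.
  rewrite <- !dist3_sq in St. fold L in St.
  pose proof (dist3_pos f a); pose proof (dist3_pos f d); pose proof (dist3_pos f p).
  assert (e1 : (rA + rF) ^ 2 < dist3 f a * dist3 f a) by nra.
  assert (e2 : (rD + rF) ^ 2 < dist3 f d * dist3 f d) by nra.
  assert (e3 : dist3 f p * dist3 f p <= rF ^ 2) by nra.
  assert (e4 : (1 - t) * (rA + rF) ^ 2 + t * (rD + rF) ^ 2 < rF ^ 2 + t * (1 - t) * (L * L)).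
  { assert ((1 - t) * (rA + rF) ^ 2 < (1 - t) * (dist3 f a * dist3 f a)) by (apply Rmult_lt_compat_l; lra).
    assert (t * (rD + rF) ^ 2 < t * (dist3 f d * dist3 f d)) by (apply Rmult_lt_compat_l; lra).
    lra. }
  assert (e5 : L * ((1 - t) * (rA + rF) ^ 2 + t * (rD + rF) ^ 2) < L * (rF ^ 2 + t * (1 - t) * (L * L)))
    by (apply Rmult_lt_compat_l; lra).
  pose proof (key_ineq rA rD rF (t * L) ((1 - t) * L) h1 h2 h3 c1 c2 ltac:(lra)) as K.
  assert (E1 : L * ((1 - t) * (rA + rF) ^ 2 + t * (rD + rF) ^ 2) =
     (1 - t) * L * (rA ^ 2 + 2 * rA * rF) + t * L * (rD ^ 2 + 2 * rD * rF) + L * rF ^ 2) by ring.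
  assert (E2 : L * (rF ^ 2 + t * (1 - t) * (L * L)) = L * rF ^ 2 + t * L * ((1 - t) * L) * (t * L + (1 - t) * L)) by ring.
  lra.
Qed.

Definition rclosed (P : R -> Prop) : Prop :=
  forall m, (forall eps, eps > 0 -> exists t, Rabs (t - m) < eps /\ P t) -> P m.

Lemma closed_union (a d : pt) (Q : ball3 -> Prop) (l : list ball3) :
  rclosed (fun t => exists F, In F l /\ Q F /\ in_ball F (lerp a d t)).
Proof.
  induction l as [|F l IH]; intros m H.
  - destruct (H 1 ltac:(lra)) as [t [_ [F [[] _]]]].
  - destruct (classic (Q F /\ in_ball F (lerp a d m))) as [yes|no].
    + exists F; split; [left; reflexivity| exact yes].
    + assert (hd : exists del, del > 0 /\ forall t, Rabs (t - m) < del ->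
                 ~ (Q F /\ in_ball F (lerp a d t))).
      { destruct (classic (Q F)) as [qF|nqF].
        2:{ exists 1; split; [lra| intros t _ [h _]; contradiction]. }
        assert (hb : radius F < dist3 (center F) (lerp a d m)).
        { destruct (Rle_or_lt (dist3 (center F) (lerp a d m)) (radius F)); [|assumption].
          exfalso; apply no; split; assumption. }
        set (g := dist3 (center F) (lerp a d m) - radius F).
        set (L := dist3 a d). pose proof (dist3_pos a d) as hL; fold L in hL.
        exists (g / (L + 1)); split.
        - unfold Rdiv; apply Rmult_gt_0_compat; [unfold g; lra| apply Rinv_0_lt_compat; lra].
        - intros t ht [_ hin]. unfold in_ball in hin.
          pose proof (dist3_tri (center F) (lerp a d t) (lerp a d m)) as T.
          rewrite dist_lerp in T. fold L in T.
          assert (Rabs (t - m) * L < g).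
          { assert (Rabs (t - m) * L <= g / (L + 1) * L) by (apply Rmult_le_compat_r; lra).
            assert (g / (L + 1) * L < g).
            { assert (0 < g) by (unfold g; lra).
              replace (g / (L + 1) * L) with (g * (L / (L + 1))) by (unfold Rdiv; ring).
              assert (L / (L + 1) < 1).
              { apply (Rmult_lt_reg_r (L + 1)); [lra|]. unfold Rdiv; rewrite Rmult_assoc, Rinv_l by lra; lra. }
              nra. }
            lra. }
          unfold g in *. lra. }
      destruct hd as [del [hdel hnot]].
      assert (IHc : exists F', In F' l /\ Q F' /\ in_ball F' (lerp a d m)).
      { apply IH. intros eps heps.
        destruct (H (Rmin eps del) ltac:(apply Rmin_pos; lra)) as [t [ht [F' [hin [hq hb]]]]].
        pose proof (Rmin_l eps del); pose proof (Rmin_r eps del).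
        exists t; split; [lra|].
        destruct hin as [<-|hin].
        - exfalso; apply (hnot t); [lra| split; assumption].
        - exists F'; auto. }
      destruct IHc as [F' [h1 h2]]. exists F'; split; [right; exact h1| exact h2].
Qed.

Lemma connect (PA PD : R -> Prop) :
  (forall t, 0 <= t <= 1 -> PA t \/ PD t) -> PA 0 -> PD 1 ->
  rclosed PA -> rclosed PD -> exists m, PA m /\ PD m.
Proof.
  intros cov hA hD cA cD.
  set (E := fun t => 0 <= t <= 1 /\ PA t).
  assert (bE : bound E) by (exists 1; intros t [ht _]; lra).
  assert (nE : exists t, E t) by (exists 0; split; [lra| exact hA]).
  destruct (completeness E bE nE) as [m [ub lub]].
  assert (m0 : 0 <= m) by (apply ub; split; [lra| exact hA]).
  assert (m1 : m <= 1) by (apply lub; intros t [ht _]; lra).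
  exists m; split.
  - apply cA. intros eps heps.
    apply NNPP; intro hn.
    assert (m <= m - eps / 2).
    { apply lub. intros t [ht hpa].
      pose proof (ub t (conj ht hpa)).
      destruct (Rle_or_lt t (m - eps)); [lra|].
      exfalso; apply hn; exists t; split; [rewrite Rabs_left1; lra| exact hpa]. }
    lra.
  - destruct (Req_dec m 1) as [e|ne]; [subst m; exact hD|].
    apply cD. intros eps heps.
    set (t := Rmin (m + eps / 2) 1).
    assert (t1 : t <= 1) by apply Rmin_r.
    assert (t2 : m < t) by (unfold t; apply Rmin_glb_lt; lra).
    assert (t3 : t <= m + eps / 2) by apply Rmin_l.
    exists t; split; [rewrite Rabs_right; lra|].
    destruct (cov t ltac:(lra)) as [h|h]; [|exact h].
    exfalso. assert (Et : E t) by (split; [lra|exact h]). pose proof (ub t Et). lra.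
Qed.

Lemma radius_ge1 sigma eta C B : Cover sigma eta C -> C B -> 1 <= radius B.
Proof.
  intros [_ [Hvol _]] hB. pose proof (Hvol B hB) as h. unfold vol in h.
  pose proof PI_RGT_0.
  set (r := radius B) in *.
  assert (r ^ 3 >= 1).
  { assert (4 / 3 * PI * (r ^ 3 - 1) >= 0) by lra.
    assert (0 < 4 / 3 * PI) by lra.
    destruct (Rle_or_lt 1 (r ^ 3)); [lra|].
    assert (4 / 3 * PI * (r ^ 3 - 1) < 0) by nra. lra. }
  destruct (Rle_or_lt 1 r); [assumption|].
  exfalso. destruct (Rle_or_lt r 0).
  - assert (r ^ 3 <= 0) by (replace (r ^ 3) with (r * (r * r)) by ring; nra). lra.
  - assert (r * r < 1) by nra. assert (r ^ 3 < 1) by (replace (r ^ 3) with (r * (r * r)) by ring; nra). lra.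
Qed.

Lemma intersect_sym B B' : intersect B B' -> intersect B' B.
Proof. intros [z [h1 h2]]; exists z; auto. Qed.

Lemma intersect_self B : 0 <= radius B -> intersect B B.
Proof. intros h; exists (center B); unfold in_ball; rewrite dist3_self; split; lra. Qed.

Lemma bridge sigma eta C A D : Cover sigma eta C -> C A -> C D ->
  dist3 (center A) (center D) <= radius A + radius D + 1 ->
  exists F G, C F /\ C G /\ intersect A F /\ intersect F G /\ intersect G D.
Proof.
  intros HC hA hD hL.
  pose proof (radius_ge1 _ _ _ _ HC hA) as rA.
  pose proof (radius_ge1 _ _ _ _ HC hD) as rD.
  pose proof HC as [Hcov [_ [Hfin _]]].
  destruct (Hfin A hA) as [lA [_ [_ hlA]]].
  destruct (Hfin D hD) as [lD [_ [_ hlD]]].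
  set (a := center A) in *. set (d := center D) in *.
  destruct (connect
     (fun t => exists F, In F lA /\ (C F /\ intersect A F) /\ in_ball F (lerp a d t))
     (fun t => exists F, In F lD /\ (C F /\ intersect D F) /\ in_ball F (lerp a d t)))
    as [m [[F [_ [[hF hAF] hpF]]] [G [_ [[hG hDG] hpG]]]]].
  - intros t ht. destruct (Hcov (lerp a d t)) as [H [hH hpH]].
    pose proof (radius_ge1 _ _ _ _ HC hH) as rH.
    destruct (geom a d (center H) (radius A) (radius D) (radius H) t rA rD rH hL ht hpH) as [g|g].
    + left. exists H. assert (intersect A H).
      { apply intersect_of_dist; try lra. fold a. rewrite dist3_sym. lra. }
      repeat split; auto.
    + right. exists H. assert (intersect D H).
      { apply intersect_of_dist; try lra. fold d. rewrite dist3_sym. lra. }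
      repeat split; auto.
  - exists A. assert (intersect A A) by (apply intersect_self; lra).
    repeat split; auto. rewrite lerp0. unfold in_ball; fold a; rewrite dist3_self; lra.
  - exists D. assert (intersect D D) by (apply intersect_self; lra).
    repeat split; auto. rewrite lerp1. unfold in_ball; fold d; rewrite dist3_self; lra.
  - apply closed_union.
  - apply closed_union.
  - exists F, G. repeat split; auto.
    + exists (lerp a d m); split; auto.
    + apply intersect_sym; auto.
Qed.

Lemma layer_up C B k E : C E -> (exists u, in_ball E u /\ layer C B k u) ->
  forall w, in_ball E w -> layer C B (S k) w.
Proof. intros hE [u [h1 h2]] w hw. simpl. exists E. split; [exact hE|]. split; [exists u; auto| exact hw]. Qed.

Lemma step sigma eta C B m z y : Cover sigma eta C -> layer C B m z -> dist3 z y <= 1 ->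
  layer C B (S (S (S (S m)))) y.
Proof.
  intros HC hz hzy. pose proof HC as [Hcov _].
  destruct (Hcov z) as [A [hA hzA]]. destruct (Hcov y) as [D [hD hyD]].
  assert (hL : dist3 (center A) (center D) <= radius A + radius D + 1).
  { pose proof (dist3_tri (center A) z (center D)). pose proof (dist3_tri z y (center D)).
    unfold in_ball in *. rewrite (dist3_sym y) in *. lra. }
  destruct (bridge _ _ _ _ _ HC hA hD hL) as [F [G [hF [hG [hAF [hFG hGD]]]]]].
  assert (LA : forall w, in_ball A w -> layer C B (S m) w).
  { apply layer_up; auto. exists z; auto. }
  assert (LF : forall w, in_ball F w -> layer C B (S (S m)) w).
  { apply layer_up; auto. destruct hAF as [u [h1 h2]]. exists u; auto. }
  assert (LG : forall w, in_ball G w -> layer C B (S (S (S m))) w).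
  { apply layer_up; auto. destruct hFG as [u [h1 h2]]. exists u; auto. }
  apply (layer_up C B _ D hD); auto. destruct hGD as [u [h1 h2]]. exists u; auto.
Qed.

Theorem corollary3p2 (sigma eta : R) (C : ball3 -> Prop) :
  0 < sigma -> 0 < eta -> Cover sigma eta C ->
  forall (B : ball3) (x : pt), C B -> in_ball B x ->
  forall y : pt, layer C B (4 * Z.to_nat (Rceil (dist3 x y)))%nat y.
Proof.
  intros hs he HC B x hB hx y.
  set (d := dist3 x y). pose proof (dist3_pos x y) as d0; fold d in d0.
  assert (hc : d <= IZR (Rceil d)).
  { unfold Rceil. destruct (archimed (- d)) as [h1 h2].
    rewrite minus_IZR. simpl IZR. lra. }
  assert (hc0 : (0 <= Rceil d)%Z) by (apply le_IZR; lra).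
  set (n := Z.to_nat (Rceil d)).
  assert (hn : d <= INR n).
  { unfold n. rewrite INR_IZR_INZ, Z2Nat.id by exact hc0. exact hc. }
  destruct n as [|n'] eqn:En.
  - simpl. unfold in_ball in *. simpl INR in hn.
    pose proof (dist3_tri (center B) x y) as T. fold d in T. lra.
  - assert (npos : 0 < INR (S n')) by (apply lt_0_INR; lia).
    assert (key : forall k, (k <= S n')%nat -> layer C B (4 * k) (lerp x y (INR k / INR (S n')))).
    { induction k as [|k IH]; intros hk.
      - rewrite Nat.mul_0_r. cbn [layer]. change (INR 0) with 0. replace (0 / INR (S n')) with 0 by (unfold Rdiv; ring).
        rewrite lerp0. exact hx.
      - replace (4 * S k)%nat with (S (S (S (S (4 * k))))) by lia.
        apply (step sigma eta C B (4 * k) (lerp x y (INR k / INR (S n')))); auto.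
        + apply IH; lia.
        + rewrite dist_lerp. fold d. rewrite (S_INR k).
          replace (INR k / INR (S n') - (INR k + 1) / INR (S n')) with (- (1 / INR (S n'))) by (field; lra).
          rewrite Rabs_Ropp, Rabs_right.
          * apply (Rmult_le_reg_l (INR (S n'))); [lra|].
            replace (INR (S n') * (1 / INR (S n') * d)) with d by (field; lra). lra.
          * unfold Rdiv. rewrite Rmult_1_l. left; apply Rinv_0_lt_compat; lra. }
    pose proof (key (S n') (le_n _)) as K.
    replace (INR (S n') / INR (S n')) with 1 in K by (field; lra).
    rewrite lerp1 in K. exact K.
Qed.
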